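(* Let $\kappa\in\mathbb{C}\setminus\{0\}$, and let $(\tau_m)_{m\in\mathbb{Z}}$, $(\theta_m)_{m\in\mathbb{Z}}$ be nonzero complex numbers. Put $$u_m=\frac{\tau_m}{\tau_{m+1}},\qquad w_m=\frac{\theta_{m+1}}{\theta_m}\qquad(m\in\mathbb{Z}).$$ Define the $\mathbb{Z}\times\mathbb{Z}$ matrices $\mathcal{L}$ and $\overline{\mathcal{L}}$ by $$\mathcal{L}_{m,k}=\delta_{m+1,k}+\sum_{j=0}^\infty b_{-j}(m)\,\delta_{m-j,k},\qquad \overline{\mathcal{L}}_{m,k}=c_{-1}(m)\,\delta_{m-1,k}+\sum_{j=0}^\infty c_j(m)\,\delta_{m+j,k},$$ where for $j\ge 0$ $$b_{-j}(m)=(-1)^{j+1}\prod_{i=1}^{j}u_{m-i}\prod_{i=0}^{j}w_{m-i}\,\bigl(\kappa u_{m-j}+u_{m-j-1}\bigr),$$ $$c_j(m)=\kappa^{-j-1}\prod_{i=0}^{j-1}u_{m+i}^{-1}\prod_{i=0}^{j}w_{m+i}^{-1}\,\bigl(\kappa u_{m+j}^{-1}+u_{m+j+1}^{-1}\bigr),\qquad c_{-1}(m)=\frac{u_{m-1}}{u_m}.$$ Then $$\mathcal{L}=\frac{\Theta}{T}\Bigl[\,W\,\frac{1}{1+\Lambda^{-1}}\,U\,(\Lambda-\kappa)\Bigr]\frac{T}{\Theta},\qquad \overline{\mathcal{L}}=\frac{\Theta}{T}\Bigl[\,\frac{1}{1-\kappa^{-1}\Lambda}\,U^{-1}\,(1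+\Lambda^{-1})\,W^{-1}\Bigr]\frac{T}{\Theta}.$$
   Context: $\Lambda$ is the $\mathbb{Z}\times\mathbb{Z}$ shift matrix, $\Lambda_{m,k}=\delta_{m+1,k}$, and $\Lambda^{-1}$ its inverse ($\Lambda^{-1}_{m,k}=\delta_{m-1,k}$); $1$ denotes the identity matrix. $U^{\pm1}=\mathrm{diag}[u_m^{\pm1}]$, $W^{\pm1}=\mathrm{diag}[w_m^{\pm1}]$ are diagonal matrices, $\frac{\Theta}{T}$ denotes the diagonal matrix $\mathrm{diag}[\theta_m/\tau_m]$ and $\frac{T}{\Theta}$ its inverse $\mathrm{diag}[\tau_m/\theta_m]$. The expressions $\frac{1}{1+\Lambda^{-1}}$ and $\frac{1}{1-\kappa^{-1}\Lambda}$ are understood as the series $\sum_{j\ge0}(-1)^j\Lambda^{-j}$ and $\sum_{j\ge0}\kappa^{-j}\Lambda^{j}$ respectively; all matrix products involved have finitely many nonzero terms in each entry. *)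

(* Defs.v *)
From HB Require Import structures.
From mathcomp Require Import all_boot all_order all_algebra.
From mathcomp Require Import all_classical all_reals.
From mathcomp Require Import complex.
Set Implicit Arguments. Unset Strict Implicit. Unset Printing Implicit Defensive.
Import Order.TTheory GRing.Theory Num.Theory.
Local Open Scope ring_scope.

Definition zmx (K : Type) := int -> int -> K.

Section ZMatrices.
Variable K : comUnitRingType.

(* Matrix product: (A B)_{m,k} = sum_{l in Z} A_{m,l} B_{l,k}, as a finitely
   supported sum (all products used below have finitely many nonzero terms
   in each entry). *)
Definition zmx_mul (A B : zmx K) : zmx K :=
  fun m k => \sum_(l \in [set: int]) (A m l * B l k).

Definition zmx_add (A B : zmx K) : zmx K := fun m k => A m k + B m k.
Definition zmx_scale (c : K) (A : zmx K) : zmx K := fun m k => c * A m k.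

Definition zmx1 : zmx K := fun m k => (m == k)%:R.
Definition Lambda : zmx K := fun m k => (k == m + 1)%:R.
Definition Lambda_inv : zmx K := fun m k => (k == m - 1)%:R.
Definition zdiag (d : int -> K) : zmx K := fun m k => if m == k then d m else 0.

Definition inv_one_plus_Lambda_inv : zmx K :=
  fun m k => \sum_(j \in [set: nat]) ((-1 : K) ^+ j * (k == m - j%:Z)%:R).
Definition inv_one_minus_kinv_Lambda (kappa : K) : zmx K :=
  fun m k => \sum_(j \in [set: nat]) (kappa ^- j * (k == m + j%:Z)%:R).
End ZMatrices.

(* Main.v *)
Require Import Defs.
From HB Require Import structures.
From mathcomp Require Import all_boot all_order all_algebra.
From mathcomp Require Import all_classical all_reals.
From mathcomp Require Import complex.
From mathcomp Require Import zify ring lra.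
Import Order.TTheory GRing.Theory Num.Theory.
Local Open Scope ring_scope.

Lemma fs1 (K : comRingType) (T : choiceType) (F : T -> K) a :
  (forall l, l != a -> F l = 0) -> \sum_(l \in [set: T]) F l = F a.
Proof.
move=> H; rewrite (fsbigE [:: a]) //.
- by rewrite big_cons big_nil mem_setT /= addr0.
- by move=> i _; rewrite inE => /H.
Qed.

Lemma fs2 (K : comRingType) (T : choiceType) (F : T -> K) a b : a != b ->
  (forall l, l != a -> l != b -> F l = 0) -> \sum_(l \in [set: T]) F l = F a + F b.
Proof.
move=> ab H; rewrite (fsbigE [:: a; b]) //.
- by rewrite !big_cons big_nil !mem_setT /= addr0.
- by rewrite /= inE ab.
- by move=> i _; rewrite !inE negb_or => /andP[] /H.
Qed.

Lemma int_cases (m k : int) : (exists j : nat, k = m - j%:Z) \/ (exists n : nat, k = m + n.+1%:Z).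
Proof.
have : k - m = k - m by [].
case: {2}(k - m) => [[|n]|n] e.
- by left; exists 0%N; lia.
- by right; exists n; lia.
- by left; exists n.+1; move: e; rewrite NegzE; lia.
Qed.

Section M.
Variable K : fieldType.
Implicit Types (A : zmx K) (d : int -> K).

Lemma mul_diag_l d A m k : zmx_mul (zdiag d) A m k = d m * A m k.
Proof.
rewrite /zmx_mul (@fs1 _ _ _ m); first by rewrite /zdiag eqxx.
by move=> l; rewrite /zdiag eq_sym => /negbTE ->; rewrite mul0r.
Qed.

Lemma mul_diag_r d A m k : zmx_mul A (zdiag d) m k = A m k * d k.
Proof.
rewrite /zmx_mul (@fs1 _ _ _ k); first by rewrite /zdiag eqxx.
by move=> l; rewrite /zdiag => /negbTE ->; rewrite mulr0.
Qed.

Lemma mul_LamI A c m k :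
  zmx_mul A (zmx_add (Lambda K) (zmx_scale c (zmx1 K))) m k = A m (k - 1) + c * A m k.
Proof.
rewrite /zmx_mul (@fs2 _ _ _ (k - 1) (k)); last 2 first.
- by apply/eqP; lia.
- move=> l h1 h2; rewrite /zmx_add /zmx_scale /Lambda /zmx1.
  have -> : (k == l + 1) = false by apply/negbTE/eqP => e; move/eqP: h1; apply; lia.
  by rewrite (negbTE h2) mulr0 addr0 mulr0.
rewrite /zmx_add /zmx_scale /Lambda /zmx1 subrK eqxx.
have -> : (k - 1 == k) = false by apply/negbTE/eqP; lia.
have -> : (k == k + 1) = false by apply/negbTE/eqP; lia.
rewrite /=; ring.
Qed.

Lemma mul_1Li A m k :
  zmx_mul A (zmx_add (zmx1 K) (Lambda_inv K)) m k = A m k + A m (k + 1).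
Proof.
rewrite /zmx_mul (@fs2 _ _ _ (k) (k + 1)); last 2 first.
- by apply/eqP; lia.
- move=> l h1 h2; rewrite /zmx_add /zmx1 /Lambda_inv.
  have -> : (k == l - 1) = false by apply/negbTE/eqP => e; move/eqP: h2; apply; lia.
  by rewrite (negbTE h1) addr0 mulr0.
rewrite /zmx_add /zmx1 /Lambda_inv addrK !eqxx.
have -> : (k == k - 1) = false by apply/negbTE/eqP; lia.
have -> : (k + 1 == k) = false by apply/negbTE/eqP; lia.
by rewrite addr0 add0r !mulr1.
Qed.

Lemma Ival m (j : nat) : @inv_one_plus_Lambda_inv K m (m - j%:Z) = (-1) ^+ j.
Proof.
rewrite /inv_one_plus_Lambda_inv (@fs1 _ _ _ j); first by rewrite eqxx mulr1.
move=> l hl; have -> : (m - j%:Z == m - l%:Z) = false.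
  by apply/negbTE/eqP => e; move/eqP: hl; apply; lia.
by rewrite mulr0.
Qed.

Lemma Izero m k : m < k -> @inv_one_plus_Lambda_inv K m k = 0.
Proof.
move=> h; rewrite /inv_one_plus_Lambda_inv fsbig1 // => j _.
have -> : (k == m - j%:Z) = false by apply/negbTE/eqP; lia.
by rewrite mulr0.
Qed.

Lemma Jval (c : K) m (j : nat) : inv_one_minus_kinv_Lambda c m (m + j%:Z) = c ^- j.
Proof.
rewrite /inv_one_minus_kinv_Lambda (@fs1 _ _ _ j); first by rewrite eqxx mulr1.
move=> l hl; have -> : (m + j%:Z == m + l%:Z) = false.
  by apply/negbTE/eqP => e; move/eqP: hl; apply; lia.
by rewrite mulr0.
Qed.

Lemma Jzero (c : K) m k : k < m -> inv_one_minus_kinv_Lambda c m k = 0.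
Proof.
move=> h; rewrite /inv_one_minus_kinv_Lambda fsbig1 // => j _.
have -> : (k == m + j%:Z) = false by apply/negbTE/eqP; lia.
by rewrite mulr0.
Qed.

End M.

Section P.
Variable K : fieldType.
Variables tau theta : int -> K.
Hypothesis htau : forall m, tau m != 0.
Hypothesis htheta : forall m, theta m != 0.

Lemma P1 m (j : nat) :
  \prod_(1 <= i < j.+1) (tau (m - i%:Z) / tau (m - i%:Z + 1)) = tau (m - j%:Z) / tau m.
Proof.
elim: j => [|j IH]; first by rewrite big_nil subr0 divff.
rewrite big_nat_recr //= IH.
have -> : m - j.+1%:Z + 1 = m - j%:Z by lia.
by field; rewrite !htau.
Qed.

Lemma P2 m (j : nat) :
  \prod_(0 <= i < j.+1) (theta (m - i%:Z + 1) / theta (m - i%:Z)) = theta (m + 1) / theta (m - j%:Z).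
Proof.
elim: j => [|j IH]; first by rewrite big_nat1 subr0.
rewrite big_nat_recr //= IH.
have -> : m - j.+1%:Z + 1 = m - j%:Z by lia.
by field; rewrite !htheta.
Qed.

Lemma P3 m (j : nat) :
  \prod_(0 <= i < j) (tau (m + i%:Z) / tau (m + i%:Z + 1))^-1 = tau (m + j%:Z) / tau m.
Proof.
elim: j => [|j IH]; first by rewrite big_nil addr0 divff.
rewrite big_nat_recr //= IH.
have -> : m + j.+1%:Z = m + j%:Z + 1 by lia.
by field; rewrite !htau.
Qed.

Lemma P4 m (j : nat) :
  \prod_(0 <= i < j.+1) (theta (m + i%:Z + 1) / theta (m + i%:Z))^-1 = theta m / theta (m + j%:Z + 1).
Proof.
elim: j => [|j IH]; first by rewrite big_nat1 addr0 invf_div.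
rewrite big_nat_recr //= IH.
have -> : m + j.+1%:Z = m + j%:Z + 1 by lia.
by field; rewrite !htheta.
Qed.
End P.

Theorem proposition2p1 (R : realType) (kappa : R[i]) (tau theta : int -> R[i])
  (hkappa : kappa != 0) (htau : forall m, tau m != 0) (htheta : forall m, theta m != 0) :
  let u := fun m : int => tau m / tau (m + 1) in
  let w := fun m : int => theta (m + 1) / theta m in
  let b := fun (j : nat) (m : int) =>
    (-1 : R[i]) ^+ j.+1 * (\prod_(1 <= i < j.+1) u (m - i%:Z))
      * (\prod_(0 <= i < j.+1) w (m - i%:Z))
      * (kappa * u (m - j%:Z) + u (m - j%:Z - 1)) in
  let c := fun (j : nat) (m : int) =>
    kappa ^- j.+1 * (\prod_(0 <= i < j) (u (m + i%:Z))^-1)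
      * (\prod_(0 <= i < j.+1) (w (m + i%:Z))^-1)
      * (kappa * (u (m + j%:Z))^-1 + (u (m + j%:Z + 1))^-1) in
  let cm1 := fun m : int => u (m - 1) / u m in
  let L : zmx R[i] := fun m k =>
    (k == m + 1)%:R + \sum_(j \in [set: nat]) (b j m * (k == m - j%:Z)%:R) in
  let Lbar : zmx R[i] := fun m k =>
    cm1 m * (k == m - 1)%:R + \sum_(j \in [set: nat]) (c j m * (k == m + j%:Z)%:R) in
  let ThT := zdiag (fun m => theta m / tau m) in
  let TTh := zdiag (fun m => tau m / theta m) in
  let U := zdiag u in
  let Uinv := zdiag (fun m => (u m)^-1) in
  let W := zdiag w in
  let Winv := zdiag (fun m => (w m)^-1) in
  L = zmx_mul (zmx_mul ThT
        (zmx_mul (zmx_mul (zmx_mul W (inv_one_plus_Lambda_inv R[i])) U)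
                 (zmx_add (Lambda R[i]) (zmx_scale (- kappa) (zmx1 R[i])))))
        TTh
  /\
  Lbar = zmx_mul (zmx_mul ThT
        (zmx_mul (zmx_mul (zmx_mul (inv_one_minus_kinv_Lambda kappa) Uinv)
                          (zmx_add (zmx1 R[i]) (Lambda_inv R[i])))
                 Winv))
        TTh.
Proof.
move=> u w b c cm1 L Lbar ThT TTh U Uinv W Winv.
split; apply/funext => m; apply/funext => k.
- rewrite /ThT /TTh mul_diag_r mul_diag_l mul_LamI !mul_diag_r !mul_diag_l.
  case: (int_cases m k) => [[j ->]|[n ->]].
  + have e1 : m - j%:Z - 1 = m - j.+1%:Z by lia.
    rewrite e1 !Ival /L.
    have -> : (m - j%:Z == m + 1) = false by apply/negbTE/eqP; lia.
    rewrite add0r (@fs1 _ _ _ j); last first.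
      move=> l hl; have -> : (m - j%:Z == m - l%:Z) = false.
        by apply/negbTE/eqP => e; move/eqP: hl; apply; lia.
      by rewrite mulr0.
    rewrite eqxx mulr1 /b /u /w P1 // P2 // e1.
    have -> : m - j.+1%:Z + 1 = m - j%:Z by lia.
    rewrite exprS.
    by field; rewrite !htau !htheta.
  + have Lz : \sum_(j \in [set: nat]) b j m * (m + n.+1%:Z == m - j%:Z)%:R = 0.
      rewrite fsbig1 // => j _.
      have -> : (m + n.+1%:Z == m - j%:Z) = false by apply/negbTE/eqP; lia.
      by rewrite mulr0.
    rewrite /L Lz addr0 (@Izero _ m (m + n.+1%:Z)); last by lia.
    case: n Lz => [|n] _.
    * have -> : m + 1%:Z - 1 = m - 0%:Z by lia.
      rewrite Ival eqxx /u /w /= expr0 subr0.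
      have -> : m + 1%:Z = m + 1 by [].
      by field; rewrite !htau !htheta.
    * rewrite (@Izero _ m (m + n.+2%:Z - 1)); last by lia.
      have -> : (m + n.+2%:Z == m + 1) = false by apply/negbTE/eqP; lia.
      rewrite /=; ring.
- rewrite /ThT /TTh mul_diag_r mul_diag_l mul_diag_r mul_1Li !mul_diag_r.
  case: (int_cases k m) => [[j e]|[n e]].
  + have -> : k = m + j%:Z by lia.
    have -> : m + j%:Z + 1 = m + j.+1%:Z by lia.
    rewrite !Jval /Lbar.
    have -> : (m + j%:Z == m - 1) = false by apply/negbTE/eqP; lia.
    rewrite mulr0 add0r (@fs1 _ _ _ j); last first.
      move=> l hl; have -> : (m + j%:Z == m + l%:Z) = false.
        by apply/negbTE/eqP => e'; move/eqP: hl; apply; lia.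
      by rewrite mulr0.
    rewrite eqxx mulr1 /c /u /w P3 // P4 //.
    have -> : m + j%:Z + 1 = m + j.+1%:Z by lia.
    rewrite exprS.
    have hk : kappa ^+ j != 0 by rewrite expf_neq0.
    by field; rewrite !htau !htheta hk hkappa.
  + have -> : k = m - n.+1%:Z by lia.
    have Lz : \sum_(j \in [set: nat]) c j m * (m - n.+1%:Z == m + j%:Z)%:R = 0.
      rewrite fsbig1 // => j _.
      have -> : (m - n.+1%:Z == m + j%:Z) = false by apply/negbTE/eqP; lia.
      by rewrite mulr0.
    rewrite /Lbar Lz addr0 (@Jzero _ kappa m (m - n.+1%:Z)); last by lia.
    case: n {e} Lz => [|n] _.
    * have -> : m - 1%:Z + 1 = m + 0%:Z by lia.
      rewrite Jval eqxx /cm1 /u /w /= expr0 addr0 invr1.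
      have -> : m - 1%:Z = m - 1 by [].
      rewrite subrK. by field; rewrite !htau !htheta.
    * rewrite (@Jzero _ kappa m (m - n.+2%:Z + 1)); last by lia.
      have -> : (m - n.+2%:Z == m - 1) = false by apply/negbTE/eqP; lia.
      rewrite /=; ring.
Qed.
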